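(* Let $\xi=(\tau_L,\delta_L,\tau_R,\delta_R)\in\Phi$ and suppose $J_2(\xi)<1$. Then the set $\Xi=\left\{(x,y)\in\mathbb{R}^2: \|f_\xi^{-i}(x,y)\|\to\infty \text{ as } i\to\infty\right\}$ is dense in $\mathbb{R}^2$.
   Context: For $\xi=(\tau_L,\delta_L,\tau_R,\delta_R)\in\mathbb{R}^4$ define $f_\xi(x,y)=(\tau_L x+y+1,\,-\delta_L x)$ if $x\le 0$ and $f_\xi(x,y)=(\tau_R x+y+1,\,-\delta_R x)$ if $x\ge 0$. Let $\Phi=\{\xi: \tau_L>\delta_L+1,\ \delta_L>0,\ \tau_R<-(\delta_R+1),\ \delta_R>0\}$; for $\xi\in\Phi$, $f_\xi$ is a homeomorphism, $\begin{bmatrix}\tau_L&1\\-\delta_L&0\end{bmatrix}$ has real eigenvalues $0<\lambda_L^s<1<\lambda_L^u$ and $\begin{bmatrix}\tau_R&1\\-\delta_R&0\end{bmatrix}$ has real eigenvalues $\lambda_R^u<-1<\lambda_R^s<0$. Let $J_2(\xi)=\max\left\{\lambda_L^s,\frac{\sqrt2\,\lambda_L^s}{\lambda_L^s+1}\right\}+\max\left\{|\lambda_R^s|,\frac{\sqrt2\,|\lambda_R^s|}{|\lambda_R^s|+1}\right\}$. $\|\cdot\|$ is the Euclidean norm. *)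

(* Defs.v *)
From Stdlib Require Import Reals Lra.
Open Scope R_scope.

Record params := Params { tauL : R; deltaL : R; tauR : R; deltaR : R }.

Definition fxi (xi : params) (p : R * R) : R * R :=
  let (x, y) := p in
  if Rle_dec x 0
  then (tauL xi * x + y + 1, - deltaL xi * x)
  else (tauR xi * x + y + 1, - deltaR xi * x).

Definition inPhi (xi : params) : Prop :=
  tauL xi > deltaL xi + 1 /\ deltaL xi > 0 /\
  tauR xi < - (deltaR xi + 1) /\ deltaR xi > 0.

(* Stable eigenvalues: roots of lambda^2 - tau lambda + delta.
   lambda_L^s is the smaller root (in (0,1)); lambda_R^s is the larger root
   (in (-1,0)) since tauR < 0. *)
Definition lamLs (xi : params) : R :=
  (tauL xi - sqrt (tauL xi ^ 2 - 4 * deltaL xi)) / 2.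
Definition lamRs (xi : params) : R :=
  (tauR xi + sqrt (tauR xi ^ 2 - 4 * deltaR xi)) / 2.

Definition J2 (xi : params) : R :=
  Rmax (lamLs xi) (sqrt 2 * lamLs xi / (lamLs xi + 1)) +
  Rmax (Rabs (lamRs xi)) (sqrt 2 * Rabs (lamRs xi) / (Rabs (lamRs xi) + 1)).

Definition norm2 (p : R * R) : R := sqrt (fst p ^ 2 + snd p ^ 2).

Definition norm_to_infty (u : nat -> R * R) : Prop :=
  forall M : R, exists N : nat, forall i : nat, (N <= i)%nat -> M < norm2 (u i).

Definition dense2 (S : R * R -> Prop) : Prop :=
  forall (p : R * R) (eps : R), eps > 0 ->
    exists q, S q /\ norm2 (fst q - fst p, snd q - snd p) < eps.

(* Main.v *)
Require Import Defs.
From Stdlib Require Import Reals Lra Psatz Lia.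
Open Scope R_scope.

Record prm := Prm { tL:R; dL:R; tR:R; dR:R; lL:R; mL:R; lR:R; mR:R }.

Definition ok (k:prm) (g:R*R->R*R) :=
  dL k>0 /\ dR k>0 /\ lL k>0 /\ lR k>0 /\ lL k + lR k < 1 /\ mL k > 1 /\ mR k > 1 /\
  lL k * mL k = dL k /\ tL k = lL k + mL k /\ lR k * mR k = dR k /\ tR k = -(lR k + mR k) /\
  (forall x y, 0<=y -> g (x,y) = (-y/dL k, x + tL k*y/dL k - 1)) /\
  (forall x y, y<=0 -> g (x,y) = (-y/dR k, x + tR k*y/dR k - 1)).

Definition Inv k (g:R*R->R*R) (Bl:R*R->Prop) n D r a b :=
  a < b /\ -1/mL k <= r <= 1/mR k /\
  forall y, a<=y<=b -> exists p, Bl p /\ Nat.iter n g p = (1 + D + r*y, y).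

Lemma stepL k g Bl n D r a b a1 b1 : ok k g -> Inv k g Bl n D r a b ->
  0 <= a1 -> a <= a1 -> a1 < b1 -> b1 <= b ->
  let s := r + tL k / dL k in let r' := -1/(dL k * s) in
  Inv k g Bl (S n) (-r'*D - 1) r' (D + s*a1) (D + s*b1) /\ s*lL k >= 1
  /\ -1/mL k <= r' <= 0.
Proof.
  intros Hk [Hab [[Hr1 Hr2] HI]] H0 H1 H2 H3 s r'.
  destruct Hk as (HdL&HdR&HlL&HlR&Hsum&HmL&HmR&EL&EtL&ER&EtR&GL&GR).
  assert (Es : s = r + 1/mL k + 1/lL k) by (unfold s; rewrite EtL, <- EL; field; lra).
  assert (Hr1' : r * mL k >= -1).
  { apply Rmult_le_compat_r with (r := mL k) in Hr1; [|lra].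
    replace (-1 / mL k * mL k) with (-1) in Hr1 by (field; lra). lra. }
  assert (Es0 : s = r + tL k / dL k) by reflexivity.
  clearbody s.
  assert (Hs : s * lL k >= 1).
  { rewrite Es. replace ((r + 1 / mL k + 1 / lL k) * lL k) with
      ((r*mL k + 1) * (lL k / mL k) + 1) by (field; lra).
    assert (0 <= (r*mL k + 1) * (lL k / mL k)).
    { apply Rmult_le_pos; [lra|]. apply Rlt_le, Rdiv_lt_0_compat; lra. }
    lra. }
  assert (Hspos : s > 0) by nra.
  assert (HdS : dL k * s >= mL k).
  { rewrite <- EL. nra. }
  assert (Hr' : -1/mL k <= r' <= 0).
  { unfold r'. split.
    - apply Rmult_le_reg_r with (r := mL k * (dL k * s)); [nra|].
      replace (-1 / mL k * (mL k * (dL k * s))) with (-(dL k * s)) by (field; nra).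
      replace (-1 / (dL k * s) * (mL k * (dL k * s))) with (- mL k) by (field; nra).
      lra.
    - apply Rmult_le_reg_r with (r := (dL k * s)); [nra|].
      replace (-1 / (dL k * s) * (dL k * s)) with (-1) by (field; nra). lra. }
  split; [|split; [exact Hs| exact Hr']].
  split; [nra|]. split.
  - split; [lra|]. apply Rle_trans with 0; [lra|].
    apply Rlt_le, Rdiv_lt_0_compat; lra.
  - intros y' Hy'.
    set (y := (y' - D)/s).
    assert (Hy : a1 <= y <= b1).
    { unfold y. split.
      - apply Rmult_le_reg_r with s; [lra|]. replace ((y'-D)/s*s) with (y'-D) by (field; lra). lra.
      - apply Rmult_le_reg_r with s; [lra|]. replace ((y'-D)/s*s) with (y'-D) by (field; lra). lra. }
    destruct (HI y ltac:(lra)) as [p [Hp Hit]].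
    exists p; split; [exact Hp|].
    rewrite PeanoNat.Nat.iter_succ, Hit.
    rewrite GL; [|lra].
    unfold r', y. f_equal.
    + field. split; lra.
    + assert (E2: tL k / dL k = s - r) by lra. 
      replace (tL k * ((y' - D) / s) / dL k) with ((tL k / dL k) * ((y' - D) / s)) by (field; lra). rewrite E2. field. lra.
Qed.

Lemma stepR k g Bl n D r a b a1 b1 : ok k g -> Inv k g Bl n D r a b ->
  b1 <= 0 -> a <= a1 -> a1 < b1 -> b1 <= b ->
  let s := r + tR k / dR k in let r' := -1/(dR k * s) in
  Inv k g Bl (S n) (-r'*D - 1) r' (D + s*b1) (D + s*a1) /\ s*lR k <= -1
  /\ 0 <= r' <= 1/mR k.
Proof.
  intros Hk [Hab [[Hr1 Hr2] HI]] H0 H1 H2 H3 s r'.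
  destruct Hk as (HdL&HdR&HlL&HlR&Hsum&HmL&HmR&EL&EtL&ER&EtR&GL&GR).
  assert (Es : s = r - 1/mR k - 1/lR k) by (unfold s; rewrite EtR, <- ER; field; lra).
  assert (Es0 : s = r + tR k / dR k) by reflexivity.
  clearbody s.
  assert (Hr2' : r * mR k <= 1).
  { apply Rmult_le_compat_r with (r := mR k) in Hr2; [|lra].
    replace (1 / mR k * mR k) with 1 in Hr2 by (field; lra). lra. }
  assert (Hs : s * lR k <= -1).
  { rewrite Es. replace ((r - 1 / mR k - 1 / lR k) * lR k) with
      ((r*mR k - 1) * (lR k / mR k) - 1) by (field; lra).
    assert ((r*mR k - 1) * (lR k / mR k) <= 0).
    { assert (0 < lR k / mR k) by (apply Rdiv_lt_0_compat; lra). nra. }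
    lra. }
  assert (Hspos : s < 0) by nra.
  assert (HdS : dR k * s <= - mR k).
  { rewrite <- ER. nra. }
  assert (Hr' : 0 <= r' <= 1/mR k).
  { unfold r'. split.
    - apply Rmult_le_reg_r with (r := - (dR k * s)); [nra|].
      replace (-1 / (dR k * s) * (- (dR k * s))) with 1 by (field; nra). lra.
    - apply Rmult_le_reg_r with (r := mR k * (-(dR k * s))); [nra|].
      replace (1 / mR k * (mR k * (-(dR k * s)))) with (-(dR k * s)) by (field; nra).
      replace (-1 / (dR k * s) * (mR k * (-(dR k * s)))) with (mR k) by (field; nra).
      lra. }
  split; [|split; [exact Hs| exact Hr']].
  split; [nra|]. split.
  - split; [|lra]. apply Rle_trans with 0; [|lra].
    apply Rmult_le_reg_r with (mL k); [lra|].
    replace (-1 / mL k * mL k) with (-1) by (field; lra). lra.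
  - intros y' Hy'.
    set (y := (y' - D)/s).
    assert (Hy : a1 <= y <= b1).
    { unfold y. split.
      - apply Rmult_le_reg_r with (-s); [lra|]. replace ((y'-D)/s*(-s)) with (-(y'-D)) by (field; lra). nra.
      - apply Rmult_le_reg_r with (-s); [lra|]. replace ((y'-D)/s*(-s)) with (-(y'-D)) by (field; lra). nra. }
    destruct (HI y ltac:(lra)) as [p [Hp Hit]].
    exists p; split; [exact Hp|].
    rewrite PeanoNat.Nat.iter_succ, Hit.
    rewrite GR; [|lra].
    unfold r', y. f_equal.
    + field. split; lra.
    + assert (E2: tR k / dR k = s - r) by lra.
      replace (tR k * ((y' - D) / s) / dR k) with ((tR k / dR k) * ((y' - D) / s)) by (field; lra). rewrite E2. field. lra.
Qed.

Lemma Dbound r' D B q : Rabs r' <= q -> Rabs D <= B -> B*(1-q) >= 1 -> Rabs(-r'*D-1) <= B.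
Proof.
  intros H1 H2 H3.
  assert (Hq: 0 <= q) by (pose proof (Rabs_pos r'); lra).
  unfold Rminus. eapply Rle_trans; [apply Rabs_triang|].
  rewrite Rabs_Ropp, Ropp_mult_distr_l_reverse, Rabs_Ropp, Rabs_mult, Rabs_R1.
  assert (Rabs r' * Rabs D <= q * B).
  { apply Rmult_le_compat; auto using Rabs_pos. }
  nra.
Qed.

Lemma step k g Bl n D r a b B : ok k g -> Inv k g Bl n D r a b -> Rabs D <= B ->
  B*(1 - 1/mL k) >= 1 -> B*(1-1/mR k) >= 1 ->
  exists D' r' a' b', Inv k g Bl (S n) D' r' a' b' /\ Rabs D' <= B /\
     (lL k + lR k)*(b'-a') >= b - a.
Proof.
  intros Hk HI HD HB1 HB2.
  pose proof Hk as Hk'.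
  destruct Hk' as (HdL&HdR&HlL&HlR&Hsum&HmL&HmR&_).
  pose proof HI as [Hab _].
  assert (ML : forall a1 b1, 0 <= a1 -> a <= a1 -> a1 < b1 -> b1 <= b ->
     (lL k + lR k)*(b1 - a1)*(r + tL k / dL k) >= b - a ->
     exists D' r' a' b', Inv k g Bl (S n) D' r' a' b' /\ Rabs D' <= B /\
     (lL k + lR k)*(b'-a') >= b - a).
  { intros a1 b1 h1 h2 h3 h4 h5.
    destruct (stepL k g Bl n D r a b a1 b1 Hk HI h1 h2 h3 h4) as [HI' [Hs Hr']].
    eexists; eexists; eexists; eexists; split; [exact HI'|]. split.
    - apply Dbound with (1/mL k); auto.
      rewrite Rabs_left1 by lra. lra.
    - nra. }
  assert (MR : forall a1 b1, b1 <= 0 -> a <= a1 -> a1 < b1 -> b1 <= b ->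
     (lL k + lR k)*(b1 - a1)*(-(r + tR k / dR k)) >= b - a ->
     exists D' r' a' b', Inv k g Bl (S n) D' r' a' b' /\ Rabs D' <= B /\
     (lL k + lR k)*(b'-a') >= b - a).
  { intros a1 b1 h1 h2 h3 h4 h5.
    destruct (stepR k g Bl n D r a b a1 b1 Hk HI h1 h2 h3 h4) as [HI' [Hs Hr']].
    eexists; eexists; eexists; eexists; split; [exact HI'|]. split.
    - apply Dbound with (1/mR k); auto.
      rewrite Rabs_right by lra. lra.
    - nra. }
  destruct HI as [_ [[Hr1 Hr2] _]].
  destruct Hk as (_&_&_&_&_&_&_&EL&EtL&ER&EtR&_).
  set (sl := r + tL k / dL k). set (sr := r + tR k / dR k).
  assert (Hsl : sl * lL k >= 1).
  { assert (Es : sl = r + 1/mL k + 1/lL k) by (unfold sl; rewrite EtL, <- EL; field; lra).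
    clearbody sl.
    assert (Hr1' : r * mL k >= -1).
    { apply Rmult_le_compat_r with (r := mL k) in Hr1; [|lra].
      replace (-1 / mL k * mL k) with (-1) in Hr1 by (field; lra). lra. }
    rewrite Es. replace ((r + 1 / mL k + 1 / lL k) * lL k) with
      ((r*mL k + 1) * (lL k / mL k) + 1) by (field; lra).
    assert (0 < lL k / mL k) by (apply Rdiv_lt_0_compat; lra). nra. }
  assert (Hsr : sr * lR k <= -1).
  { assert (Es : sr = r - 1/mR k - 1/lR k) by (unfold sr; rewrite EtR, <- ER; field; lra).
    clearbody sr.
    assert (Hr2' : r * mR k <= 1).
    { apply Rmult_le_compat_r with (r := mR k) in Hr2; [|lra].
      replace (1 / mR k * mR k) with 1 in Hr2 by (field; lra). lra. }
    rewrite Es. replace ((r - 1 / mR k - 1 / lR k) * lR k) with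
      ((r*mR k - 1) * (lR k / mR k) - 1) by (field; lra).
    assert (0 < lR k / mR k) by (apply Rdiv_lt_0_compat; lra). nra. }
  assert (Esl : r + tL k / dL k = sl) by reflexivity.
  assert (Esr : r + tR k / dR k = sr) by reflexivity.
  rewrite Esl in ML. rewrite Esr in MR.
  clearbody sl sr.
  assert (sl > 0) by nra. assert (sr < 0) by nra.
  destruct (Rle_lt_dec 0 a) as [Ha|Ha].
  { apply ML with a b; try lra.
    assert (0 <= (sl * lL k - 1) * (b - a)) by (apply Rmult_le_pos; lra).
    assert (0 <= sl * lR k * (b - a)) by (apply Rmult_le_pos; [apply Rmult_le_pos|]; lra).
    lra. }
  destruct (Rle_lt_dec b 0) as [Hb|Hb].
  { apply MR with a b; try lra.
    assert (0 <= (- sr * lR k - 1) * (b - a)) by (apply Rmult_le_pos; lra).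
    assert (0 <= - sr * lL k * (b - a)) by (apply Rmult_le_pos; [apply Rmult_le_pos|]; lra).
    lra. }
  destruct (Rle_lt_dec (- a * lL k) (b * lR k)) as [Hc|Hc].
  { apply ML with 0 b; try lra.
    assert (0 <= (sl * lL k - 1) * ((lL k + lR k) * b)) by (apply Rmult_le_pos; [lra|apply Rmult_le_pos; lra]).
    assert (E: (lL k + lR k) * (b - 0) * sl * lL k = (lL k + lR k) * b + (sl * lL k - 1) * ((lL k + lR k) * b)) by ring.
    apply Rle_ge, Rmult_le_reg_r with (lL k); [lra|].
    replace ((lL k + lR k) * (b - 0) * sl * lL k) with ((lL k + lR k) * (b - 0) * sl * lL k) by ring.
    rewrite E. lra. }
  { apply MR with a 0; try lra.
    assert (0 <= (-sr * lR k - 1) * ((lL k + lR k) * (-a))) by (apply Rmult_le_pos; [lra|apply Rmult_le_pos; lra]).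
    assert (E: (lL k + lR k) * (0 - a) * (-sr) * lR k = (lL k + lR k) * (-a) + (-sr * lR k - 1) * ((lL k + lR k) * (-a))) by ring.
    apply Rle_ge, Rmult_le_reg_r with (lR k); [lra|].
    rewrite E. lra. }
Qed.

Lemma iterate k g Bl D0 r0 a0 b0 B : ok k g -> Inv k g Bl 0 D0 r0 a0 b0 -> Rabs D0 <= B ->
  B*(1 - 1/mL k) >= 1 -> B*(1-1/mR k) >= 1 ->
  forall n, exists D r a b, Inv k g Bl n D r a b /\ Rabs D <= B /\
    b - a >= (b0 - a0) + INR n * (b0 - a0) * (1 - (lL k + lR k)).
Proof.
  intros Hk HI HD HB1 HB2.
  pose proof Hk as (HdL&HdR&HlL&HlR&Hsum&_).
  pose proof HI as [H0 _].
  induction n as [|n IH].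
  - exists D0, r0, a0, b0. simpl. split; [exact HI|]. split; [exact HD|]. lra.
  - destruct IH as (D&r&a&b&HIn&HDn&Hlen).
    destruct (step k g Bl n D r a b B Hk HIn HDn HB1 HB2) as (D'&r'&a'&b'&HI'&HD'&Hl').
    exists D', r', a', b'. split; [exact HI'|]. split; [exact HD'|].
    rewrite S_INR.
    pose proof HI' as [Hab' _].
    assert (0 <= INR n) by apply pos_INR.
    assert (HH: 0 <= INR n * (b0 - a0) * (1 - (lL k + lR k))).
    { apply Rmult_le_pos; [apply Rmult_le_pos|]; lra. }
    assert (b' - a' >= b - a).
    { assert ((lL k + lR k) * (b' - a') <= b' - a') .
      { assert (0 <= (1 - (lL k + lR k)) * (b' - a')) by (apply Rmult_le_pos; lra). lra. }
      lra. }
    assert (0 <= (1 - (lL k + lR k)) * (b' - a' - (b0 - a0))) by (apply Rmult_le_pos; lra).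
    assert ((1 - (lL k + lR k)) * (b' - a') <= b' - a' - (b - a)) by lra.
    lra.
Qed.

Lemma Wgrow (g : R*R -> R*R) dL tL iL jL M : dL > 0 -> iL > 1 -> 0 < jL < 1 ->
  tL / dL = iL + jL -> 1/dL = iL*jL -> M > 0 ->
  M*((iL-1)*(iL+1-2*jL)/4) >= 1 ->
  (forall x y, 0<=y -> g (x,y) = (-y/dL, x + tL*y/dL - 1)) ->
  forall k p, snd p >= M -> fst p - 1 + (jL + (iL-1)/2) * snd p >= 0 ->
  snd (Nat.iter k g p) >= M + INR k * (M * ((iL+1)/2 - 1)) /\
  fst (Nat.iter k g p) - 1 + (jL + (iL-1)/2) * snd (Nat.iter k g p) >= 0.
Proof.
  intros HdL Hi Hj Ea Ed HM HM2 GL k p Hp1 Hp2.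
  induction k as [|k IH].
  - simpl. lra.
  - rewrite PeanoNat.Nat.iter_succ. destruct (Nat.iter k g p) as [x y].
    simpl in IH. destruct IH as [I1 I2].
    rewrite S_INR.
    assert (Hk0 : 0 <= INR k) by apply pos_INR.
    assert (0 <= INR k * (M * ((iL + 1) / 2 - 1))).
    { apply Rmult_le_pos; [lra|]. apply Rmult_le_pos; lra. }
    assert (Hy : y >= M) by lra.
    rewrite GL by lra. simpl.
    assert (E1 : x + tL * y / dL - 1 = (x - 1) + (iL + jL) * y).
    { rewrite <- Ea. field. lra. }
    assert (E2 : - y / dL = - (iL * jL) * y).
    { rewrite <- Ed. field. lra. }
    rewrite E1, E2.
    assert (Hy' : (x - 1) + (iL + jL) * y >= (iL + 1)/2 * y) by lra.
    split.
    + assert (0 <= ((iL+1)/2 - 1) * (y - M)) by (apply Rmult_le_pos; lra).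
      lra.
    + assert (0 <= (jL + (iL - 1)/2) * ((x - 1) + (iL + jL) * y - (iL + 1)/2 * y)).
      { apply Rmult_le_pos; lra. }
      assert (0 <= (y - M) * ((iL-1)*(iL+1-2*jL)/4)).
      { apply Rmult_le_pos; [lra|]. apply Rmult_le_pos; [|lra]. apply Rmult_le_pos; lra. }
      nra.
Qed.

Lemma norm2_ge_snd p : 0 <= snd p -> snd p <= norm2 p.
Proof.
  intros H. unfold norm2. rewrite <- (sqrt_pow2 (snd p)) at 1 by exact H.
  apply sqrt_le_1_alt. pose proof (pow2_ge_0 (fst p)). lra.
Qed.

Lemma fromW (g : R*R -> R*R) dL tL iL jL M p n0 : dL > 0 -> iL > 1 -> 0 < jL < 1 ->
  tL / dL = iL + jL -> 1/dL = iL*jL -> M > 0 ->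
  M*((iL-1)*(iL+1-2*jL)/4) >= 1 ->
  (forall x y, 0<=y -> g (x,y) = (-y/dL, x + tL*y/dL - 1)) ->
  snd (Nat.iter n0 g p) >= M ->
  fst (Nat.iter n0 g p) - 1 + (jL + (iL-1)/2) * snd (Nat.iter n0 g p) >= 0 ->
  norm_to_infty (fun i => Nat.iter i g p).
Proof.
  intros HdL Hi Hj Ea Ed HM HM2 GL H1 H2 Mb.
  assert (Hc : M * ((iL + 1) / 2 - 1) > 0) by (apply Rmult_lt_0_compat; lra).
  destruct (INR_unbounded (Mb / (M * ((iL + 1) / 2 - 1)))) as [N1 HN1].
  exists (N1 + n0)%nat. intros i Hi'.
  assert (Ei : i = ((i - n0) + n0)%nat) by (clear -Hi'; lia). rewrite Ei.
  rewrite PeanoNat.Nat.iter_add.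
  destruct (Wgrow g dL tL iL jL M HdL Hi Hj Ea Ed HM HM2 GL (i - n0) _ H1 H2) as [W1 _].
  assert (HN : INR N1 <= INR (i - n0)) by (apply le_INR; lia).
  assert (Mb < INR N1 * (M * ((iL + 1) / 2 - 1))).
  { apply Rmult_lt_compat_r with (r := M * ((iL + 1) / 2 - 1)) in HN1; [|exact Hc].
    unfold Rdiv in HN1. rewrite Rmult_assoc, Rinv_l in HN1 by lra. lra. }
  assert (INR N1 * (M * ((iL + 1) / 2 - 1)) <= INR (i - n0) * (M * ((iL + 1) / 2 - 1))).
  { apply Rmult_le_compat_r; lra. }
  assert (0 <= INR N1) by apply pos_INR.
  assert (0 <= INR N1 * (M * ((iL + 1) / 2 - 1))) by (apply Rmult_le_pos; lra).
  eapply Rlt_le_trans; [|apply norm2_ge_snd; lra]. lra.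
Qed.

Lemma core k g : ok k g -> dense2 (fun p => norm_to_infty (fun i => Nat.iter i g p)).
Proof.
  intros Hk p0 eps Heps.
  pose proof Hk as (HdL&HdR&HlL&HlR&Hsum&HmL&HmR&EL&EtL&ER&EtR&GL&GR).
  set (Bl := fun q : R*R => norm2 (fst q - fst p0, snd q - snd p0) < eps).
  assert (HI0 : Inv k g Bl 0 (fst p0 - 1) 0 (snd p0 - eps/2) (snd p0 + eps/2)).
  { split; [lra|]. split.
    - split.
      + apply Rmult_le_reg_r with (mL k); [lra|].
        replace (-1 / mL k * mL k) with (-1) by (field; lra). lra.
      + apply Rlt_le, Rdiv_lt_0_compat; lra.
    - intros y Hy. exists (fst p0, y). split.
      + unfold Bl, norm2. cbn [fst snd].
        replace ((fst p0 - fst p0) ^ 2 + (y - snd p0) ^ 2) with (Rsqr (y - snd p0)) by (unfold Rsqr; ring).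
        rewrite sqrt_Rsqr_abs. apply Rabs_def1; lra.
      + simpl. f_equal. ring. }
  set (B := Rabs (fst p0 - 1) + mL k/(mL k-1) + mR k/(mR k-1)).
  assert (HB1 : B * (1 - 1/mL k) >= 1).
  { assert (0 <= mR k/(mR k-1)) by (apply Rlt_le, Rdiv_lt_0_compat; lra).
    assert (0 < 1 - 1/mL k).
    { apply Rmult_lt_reg_r with (mL k); [lra|].
      replace ((1 - 1/mL k) * mL k) with (mL k - 1) by (field; lra). lra. }
    assert (mL k/(mL k-1) * (1 - 1/mL k) = 1) by (field; lra).
    pose proof (Rabs_pos (fst p0 - 1)).
    assert (0 <= (Rabs (fst p0 - 1) + mR k/(mR k-1)) * (1 - 1/mL k)) by (apply Rmult_le_pos; lra).
    unfold B. nra. }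
  assert (HB2 : B * (1 - 1/mR k) >= 1).
  { assert (0 <= mL k/(mL k-1)) by (apply Rlt_le, Rdiv_lt_0_compat; lra).
    assert (0 < 1 - 1/mR k).
    { apply Rmult_lt_reg_r with (mR k); [lra|].
      replace ((1 - 1/mR k) * mR k) with (mR k - 1) by (field; lra). lra. }
    assert (mR k/(mR k-1) * (1 - 1/mR k) = 1) by (field; lra).
    pose proof (Rabs_pos (fst p0 - 1)).
    assert (0 <= (Rabs (fst p0 - 1) + mL k/(mL k-1)) * (1 - 1/mR k)) by (apply Rmult_le_pos; lra).
    unfold B. nra. }
  assert (HB0 : Rabs (fst p0 - 1) <= B).
  { unfold B. assert (0 <= mR k/(mR k-1)) by (apply Rlt_le, Rdiv_lt_0_compat; lra).
    assert (0 <= mL k/(mL k-1)) by (apply Rlt_le, Rdiv_lt_0_compat; lra). lra. }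
  assert (HBpos : 0 <= B) by (pose proof (Rabs_pos (fst p0 - 1)); lra).
  pose proof (iterate k g Bl _ _ _ _ B Hk HI0 HB0 HB1 HB2) as Hit.
  set (iL := 1 / lL k). set (jL := 1 / mL k).
  assert (HiL : iL > 1).
  { unfold iL. apply Rmult_lt_reg_r with (lL k); [lra|].
    replace (1 / lL k * lL k) with 1 by (field; lra). lra. }
  assert (HjL : 0 < jL < 1).
  { unfold jL. split; [apply Rdiv_lt_0_compat; lra|].
    apply Rmult_lt_reg_r with (mL k); [lra|].
    replace (1 / mL k * mL k) with 1 by (field; lra). lra. }
  assert (Ea : tL k / dL k = iL + jL) by (unfold iL, jL; rewrite EtL, <- EL; field; lra).
  assert (Ed : 1 / dL k = iL * jL) by (unfold iL, jL; rewrite <- EL; field; lra).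
  set (eta := (iL-1)*(iL+1-2*jL)/4).
  assert (Heta : eta > 0).
  { unfold eta. assert (0 < (iL-1)*(iL+1-2*jL)) by (apply Rmult_lt_0_compat; lra). lra. }
  set (M := 1/eta + 1).
  assert (HM : M > 0).
  { unfold M. assert (0 < 1/eta) by (apply Rdiv_lt_0_compat; lra). lra. }
  assert (HM2 : M * eta >= 1).
  { unfold M. replace ((1/eta + 1) * eta) with (1 + eta) by (field; lra). lra. }
  set (ep := (iL - 1)/2). set (kap := jL + ep).
  assert (Hep : ep > 0) by (unfold ep; lra).
  assert (Hkap : kap > 0) by (unfold kap; lra).
  set (K := M + 2*B + B/ep + 1/kap + 1).
  assert (HBep : ep * (B/ep) = B) by (field; lra).
  assert (Hkk : kap * (1/kap) = 1) by (field; lra).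
  assert (0 <= B/ep) by (apply Rmult_le_pos; [lra|]; apply Rlt_le, Rinv_0_lt_compat; lra).
  assert (0 <= 1/kap) by (apply Rlt_le, Rdiv_lt_0_compat; lra).
  set (sig := lL k + lR k).
  assert (Hc : eps * (1 - sig) > 0) by (apply Rmult_lt_0_compat; unfold sig; lra).
  destruct (INR_unbounded (2*K / (eps * (1 - sig)))) as [n Hn].
  destruct (Hit n) as (D&r&a&b&HIn&HDn&Hlen).
  assert (Hlen2 : b - a > 2*K).
  { apply Rmult_gt_compat_r with (r := eps * (1 - sig)) in Hn; [|exact Hc].
    unfold Rdiv in Hn. rewrite Rmult_assoc, Rinv_l in Hn by lra.
    fold sig in Hlen. lra. }
  pose proof HIn as [Hab [[Hr1 Hr2] HI]].
  assert (Hr1' : r >= - jL) by (unfold jL; lra).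
  destruct (Rlt_le_dec K b) as [Hb|Hb].
  - destruct (HI b ltac:(lra)) as [p [Hp Hq]].
    exists p. split; [|exact Hp]. unfold K in Hb.
    apply (fromW g (dL k) (tL k) iL jL M p n); try assumption.
    + rewrite Hq. simpl. lra.
    + rewrite Hq. simpl. fold ep kap.
      assert (0 <= (r + kap - ep) * b) by (apply Rmult_le_pos; unfold kap; lra).
      assert (ep * (b - B/ep) >= 0) by (apply Rle_ge, Rmult_le_pos; lra).
      assert (HDD : -B <= D) by (pose proof (Rle_abs (-D)); rewrite Rabs_Ropp in *; lra).
      assert (E : 1 + D + r * b - 1 + kap * b = D + (r + kap - ep) * b + ep * (b - B/ep) + ep * (B/ep)) by ring.
      rewrite E, HBep. lra.
  - assert (Ha : a < - K) by lra.
    destruct (HI a ltac:(lra)) as [p [Hp Hq]].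
    exists p. split; [|exact Hp].
    apply (fromW g (dL k) (tL k) iL jL M p (S n)); try assumption.
    all: rewrite PeanoNat.Nat.iter_succ, Hq, GR by lra; cbn [fst snd].
    all: set (iR := 1 / lR k); set (jR := 1 / mR k).
    all: assert (HiR : iR > 1) by (unfold iR; apply Rmult_lt_reg_r with (lR k); [lra|];
           replace (1 / lR k * lR k) with 1 by (field; lra); lra).
    all: assert (EaR : tR k / dR k = -(iR + jR)) by (unfold iR, jR; rewrite EtR, <- ER; field; lra).
    all: assert (Hr2' : r <= jR) by (unfold jR; lra).
    all: assert (Esnd : 1 + D + r * a + tR k * a / dR k - 1 = D + (iR + jR - r) * (-a))
           by (replace (tR k * a / dR k) with (tR k / dR k * a) by (field; lra); rewrite EaR; ring).
    all: rewrite Esnd.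
    all: assert (0 <= (iR + jR - r - 1) * (-a)) by (apply Rmult_le_pos; unfold K in Ha; lra).
    all: assert (HDD : -B <= D) by (pose proof (Rle_abs (-D)); rewrite Rabs_Ropp in *; lra).
    all: unfold K in Ha.
    + lra.
    + assert (0 <= - a / dR k) by (apply Rmult_le_pos; [lra|]; apply Rlt_le, Rinv_0_lt_compat; lra).
      fold ep kap.
      assert (0 <= kap * (D + (iR + jR - r) * (-a) - B - 1/kap)) by (apply Rmult_le_pos; lra).
      assert (0 <= kap * B) by (apply Rmult_le_pos; lra). lra.
Qed.

Theorem lemma6p3 (xi : params) (g : R * R -> R * R) :
  inPhi xi ->
  (forall p, g (fxi xi p) = p) ->
  (forall p, fxi xi (g p) = p) ->
  J2 xi < 1 ->
  dense2 (fun p => norm_to_infty (fun i => Nat.iter i g p)).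
Proof.
  intros [H1 [H2 [H3 H4]]] Hgf Hfg HJ.
  apply (core (Prm (tauL xi) (deltaL xi) (tauR xi) (deltaR xi) (lamLs xi) (tauL xi - lamLs xi)
                   (- lamRs xi) (- (tauR xi - lamRs xi)))).
  assert (HJ1 : lamLs xi + Rabs (lamRs xi) <= J2 xi).
  { unfold J2. pose proof (Rmax_l (lamLs xi) (sqrt 2 * lamLs xi / (lamLs xi + 1))).
    pose proof (Rmax_l (Rabs (lamRs xi)) (sqrt 2 * Rabs (lamRs xi) / (Rabs (lamRs xi) + 1))). lra. }
  assert (DL : 0 <= tauL xi ^ 2 - 4 * deltaL xi).
  { assert (0 <= (tauL xi - deltaL xi - 1) * (tauL xi + deltaL xi + 1)) by (apply Rmult_le_pos; lra).
    assert (0 <= (deltaL xi - 1) * (deltaL xi - 1)) by (apply Rle_0_sqr). nra. }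
  assert (DR : 0 <= tauR xi ^ 2 - 4 * deltaR xi).
  { assert (0 <= (- tauR xi - deltaR xi - 1) * (- tauR xi + deltaR xi + 1)) by (apply Rmult_le_pos; lra).
    assert (0 <= (deltaR xi - 1) * (deltaR xi - 1)) by (apply Rle_0_sqr). nra. }
  pose proof (sqrt_sqrt _ DL) as SL. pose proof (sqrt_pos (tauL xi ^ 2 - 4 * deltaL xi)) as SL0.
  pose proof (sqrt_sqrt _ DR) as SR. pose proof (sqrt_pos (tauR xi ^ 2 - 4 * deltaR xi)) as SR0.
  assert (EL : lamLs xi = (tauL xi - sqrt (tauL xi ^ 2 - 4 * deltaL xi)) / 2) by reflexivity.
  assert (ER : lamRs xi = (tauR xi + sqrt (tauR xi ^ 2 - 4 * deltaR xi)) / 2) by reflexivity.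
  set (sL := sqrt (tauL xi ^ 2 - 4 * deltaL xi)) in *.
  set (sR := sqrt (tauR xi ^ 2 - 4 * deltaR xi)) in *.
  clearbody sL sR.
  assert (HsL : sL < tauL xi) by nra.
  assert (HsR : sR < - tauR xi) by nra.
  assert (HlL : lamLs xi > 0) by lra.
  assert (HlR : lamRs xi < 0) by lra.
  rewrite Rabs_left in HJ1 by lra.
  assert (PL : lamLs xi * (tauL xi - lamLs xi) = deltaL xi) by (rewrite EL; nra).
  assert (PR : - lamRs xi * - (tauR xi - lamRs xi) = deltaR xi) by (rewrite ER; nra).
  unfold ok; cbn [tL dL tR dR lL mL lR mR].
  split; [lra|]. split; [lra|]. split; [lra|]. split; [lra|]. split; [lra|].
  split.
  { assert ((1 - lamLs xi) * (tauL xi - lamLs xi - 1) > 0) by nra.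
    assert (1 - lamLs xi > 0) by lra. nra. }
  split.
  { assert ((1 + lamRs xi) * (- (tauR xi - lamRs xi) - 1) > 0) by nra.
    assert (1 + lamRs xi > 0) by lra. nra. }
  split; [exact PL|]. split; [ring|]. split; [exact PR|]. split; [ring|].
  split.
  - intros x y Hy.
    rewrite <- (Hgf (- y / deltaL xi, x + tauL xi * y / deltaL xi - 1)). f_equal.
    unfold fxi. destruct (Rle_dec (- y / deltaL xi) 0) as [Hd|Hd].
    + f_equal; field; lra.
    + exfalso. apply Hd. unfold Rdiv. rewrite Ropp_mult_distr_l_reverse.
      apply Ropp_le_cancel. rewrite Ropp_involutive, Ropp_0.
      apply Rmult_le_pos; [lra|]. apply Rlt_le, Rinv_0_lt_compat; lra.
  - intros x y Hy.
    rewrite <- (Hgf (- y / deltaR xi, x + tauR xi * y / deltaR xi - 1)). f_equal.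
    unfold fxi. destruct (Rle_dec (- y / deltaR xi) 0) as [Hd|Hd].
    + assert (Hy0 : y = 0).
      { destruct (Req_dec y 0) as [|Hn]; [assumption|]. exfalso.
        assert (0 < - y / deltaR xi) by (apply Rdiv_lt_0_compat; lra). lra. }
      subst y. f_equal; field; lra.
    + f_equal; field; lra.
Qed.
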